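(* Let $X$ be a digraph and $S\subset V(X)$ such that every pair $x\notin S$, $y\in S$ joined by an arc (in either direction) forms a digon. Then $X$ and the digraph obtained from $X$ by replacing each such digon $\{x,y\}$ ($x\notin S$, $y\in S$) by the single arc $xy$ have the same $H$-spectrum.
   Context: A digraph $X$ has a finite vertex set and an arc set of ordered pairs of distinct vertices; $\{x,y\}$ is a digon if both $xy,yx$ are arcs. $H(X)$ has $(u,v)$-entry $1$ if $uv$ and $vu$ are arcs, $i$ if only $uv$ is an arc, $-i$ if only $vu$ is an arc, and $0$ otherwise; two digraphs have the same $H$-spectrum if their Hermitian adjacency matrices have the same characteristic polynomial. *)

(* Defs.v *)
From HB Require Import structures.
From mathcomp Require Import all_boot all_order all_algebra all_field.
Set Implicit Arguments. Unset Strict Implicit. Unset Printing Implicit Defensive.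
Import Order.TTheory GRing.Theory Num.Theory.
Local Open Scope ring_scope.

Definition digraph_rel (V : finType) (arc : rel V) : Prop := forall x, ~~ arc x x.

Definition hermAdj (V : finType) (arc : rel V) : 'M[algC]_#|V| :=
  \matrix_(i, j)
    let u := enum_val i in let v := enum_val j in
    if arc u v && arc v u then 1
    else if arc u v then 'i
    else if arc v u then - 'i
    else 0.

Definition same_H_spectrum (V : finType) (a1 a2 : rel V) : Prop :=
  char_poly (hermAdj a1) = char_poly (hermAdj a2).

(* Replace each digon {x,y} with x \notin S, y \in S by the single arc x y,
   i.e. delete the arcs y x going from S to outside S. *)
Definition reduce_digons (V : finType) (arc : rel V) (S : {set V}) : rel V :=
  fun u v => arc u v && ~~ ((u \in S) && (v \notin S)).

(* Main.v *)
Require Import Defs.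
From HB Require Import structures.
From mathcomp Require Import all_boot all_order all_algebra all_field.
Set Implicit Arguments. Unset Strict Implicit. Unset Printing Implicit Defensive.
Import Order.TTheory GRing.Theory Num.Theory.
Local Open Scope ring_scope.

Lemma char_poly_conj (R : comNzRingType) n (P A Q : 'M[R]_n) :
  P *m Q = 1%:M -> char_poly (P *m A *m Q) = char_poly A.
Proof.
move=> PQ.
have E : char_poly_mx (P *m A *m Q) =
   map_mx polyC P *m char_poly_mx A *m map_mx polyC Q.
  rewrite /char_poly_mx mulmxBr mulmxBl !map_mxM.
  congr (_ - _).
  rewrite mul_mx_scalar -scalemxAl -map_mxM PQ.
  idtac.
  by apply/matrixP=> i j; rewrite !mxE; case: (i == j); rewrite /= ?mulr1n ?mulr0n ?mulr1 ?mulr0.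
rewrite /char_poly E !det_mulmx mulrAC -det_mulmx -map_mxM PQ.
by rewrite map_scalar_mx det1 mul1r.
Qed.

Theorem proposition8p3 (V : finType) (arc : rel V) (S : {set V}) :
  digraph_rel arc ->
  (forall x y, x \notin S -> y \in S -> arc x y || arc y x -> arc x y && arc y x) ->
  same_H_spectrum arc (reduce_digons arc S).
Proof.
move=> _ H.
pose d (v : V) : algC := if v \in S then - 'i else 1.
pose e (v : V) : algC := if v \in S then 'i else 1.
have de : forall v, d v * e v = 1.
  move=> v; rewrite /d /e; case: (v \in S); rewrite ?mulr1 //.
  by rewrite mulNr -expr2 sqrCi opprK.
pose D : 'M[algC]_#|V| := diag_mx (\row_i d (enum_val i)).
pose F : 'M[algC]_#|V| := diag_mx (\row_i e (enum_val i)).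
have DF : D *m F = 1%:M.
  apply/matrixP=> i j; rewrite mul_diag_mx !mxE.
  by case: (i =P j) => [->|_]; rewrite ?mulr0 //= de.
rewrite /same_H_spectrum -(char_poly_conj (hermAdj arc) DF).
congr char_poly.
apply/matrixP=> i j; rewrite mul_mx_diag mul_diag_mx !mxE.
set u := enum_val i; set v := enum_val j.
rewrite /reduce_digons /d /e.
case uS: (u \in S); case vS: (v \in S) => /=.
- rewrite !andbT mulrAC mulNr -expr2 sqrCi opprK mul1r.
  by case: (arc u v); case: (arc v u).
- rewrite !andbT !andbF.
  have := H v u (negbT vS) uS; rewrite orbC.
  case: (arc u v); case: (arc v u) => /= h;
    try (have hf := h isT; discriminate hf).
  + by rewrite !mulr1.
  + by rewrite mulr0 mul0r.
- rewrite !andbT !andbF.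
  have := H u v (negbT uS) vS.
  case: (arc u v); case: (arc v u) => /= h;
    try (have hf := h isT; discriminate hf).
  + by rewrite !mul1r.
  + by rewrite mulr0 mul0r.
- rewrite !andbT mulr1 mul1r.
  by case: (arc u v); case: (arc v u).
Qed.
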